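(* Let $(T,C,K,R)$ be an interval knapsack covering instance, $y\in[0,1]^T$, $S^+=\{s\in[T]:y_s=1\}$, and $\tilde R_{a,b}:=\max\{R_{a,b}-C(S^+\cap(a,b]),0\}$ for every interval $(a,b]$ over $[T]$. Assume that for every interval $(a,b]$ with $\tilde R_{a,b}>0$, either $\sum_{s\in(a,b]\setminus S^+}\min\{C_s,\tilde R_{a,b}\}y_s\ge10\tilde R_{a,b}$ or $\sum_{s\in(a,b]\setminus S^+:C_s\ge\tilde R_{a,b}}y_s\ge6$. For every interval $(a,b]$ define $$\tilde R'_{a,b}:=\sup\Big\{W\ge0:\ \sum_{s\in(a,b]\setminus S^+}\min\{C_s,W\}y_s\ge2W\ \text{ or }\ \sum_{s\in(a,b]\setminus S^+:C_s\ge W}y_s\ge1\Big\}.$$ Construct a family $\mathcal S$ of intervals by the recursive procedure $P(a,b)$ started as $P(0,T)$ with $\mathcal S=\emptyset$: $P(a,b)$ adds $(a,b]$ to $\mathcal S$, and if $a+1<b$ it picks some $c\in(a,b)$ maximizing $\min\{\tilde R'_{a,c},\tilde R'_{c,b}\}$ and calls $P(a,c)$ and $P(c,b)$. Then for every interval $(a,b]$ with $\tilde R_{a,b}>0$ there exists $(a',b']\in\mathcal S$ with $(a',b']\subseteq(a,b]$ and $\tilde R'_{a',b'}\ge\tilde R_{a,b}$.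
   Context: For integers $a<b$, $(a,b]$ denotes the set of integers $\{a+1,\dots,b\}$; an interval over $[T]$ is $(a,b]$ with integers $0\le a<b\le T$. For $S\subseteq[T]$, $C(S)=\sum_{s\in S}C_s$. An interval knapsack covering instance $(T,C,K,R)$ consists of knapsacks $[T]$, each $s$ with capacity $C_s>0$ and cost $K_s\ge0$, and a requirement $R_{a,b}\ge0$ for every interval $(a,b]$ over $[T]$. *)

(* Defs.v *)
From HB Require Import structures.
From mathcomp Require Import all_boot all_order all_algebra.
From mathcomp Require Import boolp classical_sets reals.
Set Implicit Arguments. Unset Strict Implicit. Unset Printing Implicit Defensive.
Import Order.TTheory GRing.Theory Num.Theory.
Local Open Scope ring_scope.
Local Open Scope classical_set_scope.

(* Knapsacks are s = 1..T; C s capacity, y s fractional value.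
   S^+ = {s : y s = 1}.  The interval (a,b] is {a+1,...,b}. *)

Definition capSplus {R : realType} (C y : nat -> R) (a b : nat) : R :=
  \sum_(a.+1 <= s < b.+1 | y s == 1) C s.

Definition Rtilde {R : realType} (C y : nat -> R) (Req : nat -> nat -> R)
  (a b : nat) : R :=
  Num.max (Req a b - capSplus C y a b) 0.

Definition truncsum {R : realType} (C y : nat -> R) (a b : nat) (W : R) : R :=
  \sum_(a.+1 <= s < b.+1 | y s != 1) Num.min (C s) W * y s.

Definition bigsum {R : realType} (C y : nat -> R) (a b : nat) (W : R) : R :=
  \sum_(a.+1 <= s < b.+1 | (y s != 1) && (W <= C s)) y s.

Definition Rtilde' {R : realType} (C y : nat -> R) (a b : nat) : R :=
  sup [set W : R | 0 <= W /\
         (2 * W <= truncsum C y a b W \/ 1 <= bigsum C y a b W)].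

(* The family S produced by P(0,T), where ch a b is the split point chosen
   by the call P(a,b). *)
Inductive inS (T : nat) (ch : nat -> nat -> nat) : nat -> nat -> Prop :=
| inS_root : inS T ch 0 T
| inS_left : forall a b, inS T ch a b -> (a.+1 < b)%N -> inS T ch a (ch a b)
| inS_right : forall a b, inS T ch a b -> (a.+1 < b)%N -> inS T ch (ch a b) b.

(* Main.v *)
Require Import Defs.
From HB Require Import structures.
From mathcomp Require Import all_boot all_order all_algebra.
From mathcomp Require Import boolp classical_sets reals.
From mathcomp Require Import zify lra.
Import Order.TTheory GRing.Theory Num.Theory.
Local Open Scope ring_scope.
Set Implicit Arguments. Unset Strict Implicit. Unset Printing Implicit Defensive.

Section Sums.
Variable R : realType.
Variable T : nat.
Variable P : pred nat.
Variable F : nat -> R.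
Hypothesis F0 : forall s, (1 <= s <= T)%N -> P s -> 0 <= F s.

Definition Ssum x z := \sum_(x.+1 <= s < z.+1 | P s) F s.

Lemma S_cat x m z : (x <= m <= z)%N -> Ssum x z = Ssum x m + Ssum m z.
Proof. move=> /andP[h1 h2]; rewrite /Ssum (big_cat_nat _ (n:=m.+1)) //. Qed.

Lemma S_ge0 x z : (z <= T)%N -> 0 <= Ssum x z.
Proof.
move=> hz; rewrite /Ssum big_seq_cond; apply: sumr_ge0 => s /andP[].
rewrite mem_index_iota => /andP[h1 h2] hP; apply: F0 => //; lia.
Qed.

Lemma S_mono x z x' z' : (x' <= x <= z)%N -> (z <= z' <= T)%N -> Ssum x z <= Ssum x' z'.
Proof.
move=> /andP[h1 h2] /andP[h3 h4].
rewrite (@S_cat x' x z') ?(@S_cat x z z'); try lia.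
have := @S_ge0 x' x; have := @S_ge0 z z'. move=> A B.
have : 0 <= Ssum z z' by apply: A; lia.
have : 0 <= Ssum x' x by apply: B; lia.
lra.
Qed.

Lemma S_split x z (t u : R) : 0 < t -> 0 <= u -> (z <= T)%N ->
  (forall s, (1 <= s <= T)%N -> P s -> F s <= u) ->
  t + u + t <= Ssum x z -> exists m, (x < m < z)%N /\ t <= Ssum x m /\ t <= Ssum m z.
Proof.
move=> ht hu hz Fu hS.
have hxz : (x <= z)%N.
  case: (leqP x z) => // hzx; move: hS; rewrite /Ssum big_geq; last lia.
  lra.
have ex : exists m, (x <= m <= z)%N && (t <= Ssum x m).
  by exists z; rewrite hxz leqnn /=; lra.
case: (ex_minnP ex) => m /andP[/andP[hm1 hm2] htm] hmin.
have hxm : (x < m)%N.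
  case: (ltnP x m) => // hmx; have e : m = x by lia.
  move: htm; rewrite e /Ssum big_geq //; lra.
have hprev : Ssum x m.-1 < t.
  rewrite ltNge; apply/negP => hle.
  have := hmin m.-1; rewrite hle andbT; have -> : (x <= m.-1 <= z)%N by lia.
  move=> /(_ isT); lia.
have hlast : Ssum x m <= Ssum x m.-1 + u.
  rewrite /Ssum; have -> : m.+1 = m.-1.+2 by lia.
  rewrite big_mkcond /= big_nat_recr /=; last lia.
  rewrite -big_mkcond /=; have -> : m.-1.+1 = m by lia.
  case: ifP => hP; last lra.
  have := Fu m; have -> : (1 <= m <= T)%N by lia.
  move=> /(_ isT hP); lra.
have hcat := @S_cat x m z; rewrite hcat in hS; last lia.
exists m; split; last (split => //; lra).
apply/andP; split => //.
case: (ltnP m z) => // hzm; have e : z = m by lia.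
have h0 : Ssum m m = 0 by rewrite /Ssum big_geq.
move: hS; rewrite e h0; lra.
Qed.
End Sums.

Section Main.
Variable R : realType.
Variable T : nat.
Variables C y : nat -> R.
Variable ch : nat -> nat -> nat.
Hypothesis HC : forall s, (1 <= s <= T)%N -> 0 < C s.
Hypothesis Hy : forall s, (1 <= s <= T)%N -> 0 <= y s <= 1.
Hypothesis Hch : forall a b, (a.+1 < b <= T)%N ->
     (a < ch a b < b)%N /\
     (forall c, (a < c < b)%N ->
        Num.min (Rtilde' C y a c) (Rtilde' C y c b) <=
        Num.min (Rtilde' C y a (ch a b)) (Rtilde' C y (ch a b) b)).
Variable W : R.
Hypothesis HW : 0 < W.

Definition Pt := fun s => y s != 1.
Definition Ft := fun s => Num.min (C s) W * y s.
Definition Pb := fun s => (y s != 1) && (W <= C s).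
Definition Fb := fun s => y s.

Lemma trunc_S x z : truncsum C y x z W = Ssum Pt Ft x z.
Proof. by []. Qed.
Lemma big_S x z : bigsum C y x z W = Ssum Pb Fb x z.
Proof. by []. Qed.

Lemma min_props s : (1 <= s <= T)%N -> 0 <= Num.min (C s) W /\ Num.min (C s) W <= W
  /\ Num.min (C s) W <= C s.
Proof.
move=> hs; have := HC hs => hc.
split; first by rewrite le_min; apply/andP; split; apply: ltW.
by split; rewrite ge_min lexx ?orbT.
Qed.

Lemma Ft0 s : (1 <= s <= T)%N -> Pt s -> 0 <= Ft s.
Proof.
move=> hs _; have [h1 _] := min_props hs; have /andP[y0 y1] := Hy hs.
by rewrite /Ft mulr_ge0.
Qed.
Lemma Ftu s : (1 <= s <= T)%N -> Pt s -> Ft s <= W.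
Proof.
move=> hs _; have [h1 [h2 _]] := min_props hs; have /andP[y0 y1] := Hy hs.
rewrite /Ft; nra.
Qed.
Lemma Fb0 s : (1 <= s <= T)%N -> Pb s -> 0 <= Fb s.
Proof. by move=> hs _; have /andP[y0 y1] := Hy hs. Qed.
Lemma Fbu s : (1 <= s <= T)%N -> Pb s -> Fb s <= 1.
Proof. by move=> hs _; have /andP[y0 y1] := Hy hs. Qed.

Definition G x z := 2 * W <= truncsum C y x z W \/ 1 <= bigsum C y x z W.

Lemma G_mono x z x' z' : (x' <= x <= z)%N -> (z <= z' <= T)%N -> G x z -> G x' z'.
Proof.
move=> h1 h2; rewrite /G !trunc_S !big_S.
have := S_mono Ft0 h1 h2; have := S_mono Fb0 h1 h2.
move=> A B [H|H]; [left|right]; lra.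
Qed.

Lemma G_R' x z : (z <= T)%N -> G x z -> W <= Rtilde' C y x z.
Proof.
move=> hz hG; rewrite /Rtilde'; apply: ub_le_sup; last first.
  by split; [apply: ltW | exact: hG].
exists (\sum_(x.+1 <= s < z.+1) C s) => V [V0 [HV|HV]].
- suff Hs : truncsum C y x z V <= \sum_(x.+1 <= s < z.+1) C s.
    have hh : V <= \sum_(x.+1 <= s < z.+1) C s by lra.
    exact: hh.
  rewrite /truncsum big_mkcond /= big_seq [leRHS]big_seq; apply: ler_sum => s.
  rewrite mem_index_iota => hs.
  have hs' : (1 <= s <= T)%N by lia.
  have hc := HC hs'; have /andP[y0 y1] := Hy hs'.
  case: ifP => _; last by apply: ltW.
  have h1 : Num.min (C s) V <= C s by rewrite ge_min lexx.
  have h2 : 0 <= Num.min (C s) V by rewrite le_min; apply/andP; split => //; apply: ltW.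
  nra.
- suff Hs : V * bigsum C y x z V <= \sum_(x.+1 <= s < z.+1) C s.
    have hh : V <= \sum_(x.+1 <= s < z.+1) C s by nra.
    exact: hh.
  rewrite /bigsum mulr_sumr big_mkcond /= big_seq [leRHS]big_seq; apply: ler_sum => s.
  rewrite mem_index_iota => hs.
  have hs' : (1 <= s <= T)%N by lia.
  have hc := HC hs'; have /andP[y0 y1] := Hy hs'.
  case: ifP => [/andP[_ hV]|_]; last by apply: ltW.
  nra.
Qed.


Hypothesis T0 : (0 < T)%N.

Lemma inS_bound p q : inS T ch p q -> (p < q <= T)%N.
Proof.
elim=> [|a b _ IH hab|a b _ IH hab] //=.
- by rewrite T0 leqnn.
- have [/andP[h1 h2] _] := Hch (a:=a) (b:=b) (ltac:(lia)); lia.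
- have [/andP[h1 h2] _] := Hch (a:=a) (b:=b) (ltac:(lia)); lia.
Qed.

Lemma split_good p q m : (p < m < q)%N -> (q <= T)%N ->
  W <= Rtilde' C y p m -> W <= Rtilde' C y m q ->
  W <= Rtilde' C y p (ch p q) /\ W <= Rtilde' C y (ch p q) q.
Proof.
move=> hm hq h1 h2.
have [_ hmax] := Hch (a:=p) (b:=q) (ltac:(lia)).
have := hmax m hm.
have hW : W <= Num.min (Rtilde' C y p m) (Rtilde' C y m q) by rewrite le_min h1 h2.
move=> /(le_trans hW); rewrite le_min => /andP[-> ->] //.
Qed.

Definition Goal a b := exists a' b', inS T ch a' b' /\ (a <= a')%N /\ (b' <= b)%N /\
      W <= Rtilde' C y a' b'.

Lemma left_al n : forall p q b, (q - p <= n)%N -> inS T ch p q -> (b <= q)%N ->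
  (exists m, (p < m < b)%N /\ G p m /\ G m b) -> Goal p b.
Proof.
elim: n => [|n IH] p q b hn hS hb [m [hm [g1 g2]]].
  have := inS_bound hS; lia.
have /andP[hpq hqT] := inS_bound hS.
case: (ltnP b q) => hbq; last first.
  have e : b = q by lia.
  exists p, q; split => //; split; first lia; split; first lia.
  apply: G_R' => //; apply: (G_mono (x:=p) (z:=m)) => //; lia.
have h1 : W <= Rtilde' C y p m by apply: G_R' => //; lia.
have h2 : W <= Rtilde' C y m q.
  apply: G_R' => //; apply: (G_mono (x:=m) (z:=b)) => //; lia.
have [k1 k2] := split_good (p:=p) (q:=q) (m:=m) (ltac:(lia)) hqT h1 h2.
have [/andP[c1 c2] _] := Hch (a:=p) (b:=q) (ltac:(lia)).
have hSl := inS_left hS (ltac:(lia) : (p.+1 < q)%N).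
case: (leqP (ch p q) b) => hcb.
  by exists p, (ch p q).
apply: (IH p (ch p q) b) => //; [lia | lia | by exists m].
Qed.

Lemma right_al n : forall p q a, (q - p <= n)%N -> inS T ch p q -> (p <= a)%N ->
  (exists m, (a < m < q)%N /\ G a m /\ G m q) -> Goal a q.
Proof.
elim: n => [|n IH] p q a hn hS ha [m [hm [g1 g2]]].
  have := inS_bound hS; lia.
have /andP[hpq hqT] := inS_bound hS.
case: (ltnP p a) => hpa; last first.
  have e : a = p by lia.
  exists p, q; split => //; split; first lia; split; first lia.
  apply: G_R' => //; apply: (G_mono (x:=m) (z:=q)) => //; lia.
have h1 : W <= Rtilde' C y p m.
  apply: G_R'; first lia. apply: (G_mono (x:=a) (z:=m)) => //; lia.
have h2 : W <= Rtilde' C y m q by apply: G_R' => //; lia.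
have [k1 k2] := split_good (p:=p) (q:=q) (m:=m) (ltac:(lia)) hqT h1 h2.
have [/andP[c1 c2] _] := Hch (a:=p) (b:=q) (ltac:(lia)).
have hSr := inS_right hS (ltac:(lia) : (p.+1 < q)%N).
case: (leqP a (ch p q)) => hca.
  by exists (ch p q), q.
apply: (IH (ch p q) q a) => //; [lia | lia | by exists m].
Qed.


Lemma Goal_weak a b a0 b0 : Goal a0 b0 -> (a <= a0)%N -> (b0 <= b)%N -> Goal a b.
Proof.
move=> [a' [b' [h1 [h2 [h3 h4]]]]] ha hb; exists a', b'; do !split => //; lia.
Qed.

Lemma mass_split a c b : (a < c < b)%N -> (b <= T)%N ->
  (10 * W <= truncsum C y a b W \/ 6 <= bigsum C y a b W) ->
  (exists m, (a < m < c)%N /\ G a m /\ G m c) \/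
  (exists m, (c < m < b)%N /\ G c m /\ G m b).
Proof.
move=> hc hb; have HW' := HW; rewrite /G !trunc_S !big_S.
rewrite (@S_cat _ Pt Ft a c b) ?(@S_cat _ Pb Fb a c b); try lia.
have hW0 : 0 < 2 * W by lra.
have hW1 : 0 <= W by lra.
have hc' : (c <= T)%N by lia.
case=> H.
- case: (lerP (5 * W) (Ssum Pt Ft a c)) => H1.
    left; have [m [hm [k1 k2]]] := @S_split _ _ Pt Ft a c _ _ hW0 hW1 hc' Ftu (ltac:(lra)).
    by exists m; split => //; split; left.
  right; have [m [hm [k1 k2]]] := @S_split _ _ Pt Ft c b _ _ hW0 hW1 hb Ftu (ltac:(lra)).
  by exists m; split => //; split; left.
- have h10 : (0:R) < 1 by lra.
  have h11 : (0:R) <= 1 by lra.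
  case: (lerP 3 (Ssum Pb Fb a c)) => H1.
    left; have [m [hm [k1 k2]]] := @S_split _ _ Pb Fb a c _ _ h10 h11 hc' Fbu (ltac:(lra)).
    by exists m; split => //; split; right.
  right; have [m [hm [k1 k2]]] := @S_split _ _ Pb Fb c b _ _ h10 h11 hb Fbu (ltac:(lra)).
  by exists m; split => //; split; right.
Qed.

Lemma main_rec n : forall p q a b, (q - p <= n)%N -> inS T ch p q -> (p <= a)%N ->
  (a < b)%N -> (b <= q)%N ->
  (10 * W <= truncsum C y a b W \/ 6 <= bigsum C y a b W) -> Goal a b.
Proof.
elim: n => [|n IH] p q a b hn hS hpa hab hbq hM.
  have := inS_bound hS; lia.
have /andP[hpq hqT] := inS_bound hS.
case: (boolP ((p == a) && (q == b))) => [/andP[/eqP e1 /eqP e2]|hne].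
  exists a, b; rewrite -e1 -e2; do !split => //.
  apply: G_R' => //; rewrite /G; case: hM => H; [left|right]; rewrite e1 e2.
    have := HW; lra.
  lra.
have hpq2 : (p.+1 < q)%N by move: hne; rewrite negb_and => /orP[] /eqP; lia.
have [/andP[c1 c2] _] := Hch (a:=p) (b:=q) (ltac:(lia)).
have hSl := inS_left hS hpq2.
have hSr := inS_right hS hpq2.
case: (leqP (ch p q) a) => hca.
  by apply: (IH (ch p q) q) => //; lia.
case: (leqP b (ch p q)) => hcb.
  by apply: (IH p (ch p q)) => //; lia.
case: (@mass_split a (ch p q) b (ltac:(lia)) (ltac:(lia)) hM) => Hm.
  apply: (@Goal_weak _ _ a (ch p q)) => //; last lia.
  exact: (@right_al (ch p q - p) p (ch p q) a).
apply: (@Goal_weak _ _ (ch p q) b) => //; last lia.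
exact: (@left_al (q - ch p q) (ch p q) q b).
Qed.

End Main.

Theorem lemma6 (R : realType) (T : nat) (C K : nat -> R)
  (Req : nat -> nat -> R) (y : nat -> R) (ch : nat -> nat -> nat) :
  (forall s, (1 <= s <= T)%N -> 0 < C s) ->
  (forall s, (1 <= s <= T)%N -> 0 <= K s) ->
  (forall a b, (a < b <= T)%N -> 0 <= Req a b) ->
  (forall s, (1 <= s <= T)%N -> 0 <= y s <= 1) ->
  (forall a b, (a < b <= T)%N -> 0 < Rtilde C y Req a b ->
     10 * Rtilde C y Req a b <= truncsum C y a b (Rtilde C y Req a b) \/
     6 <= bigsum C y a b (Rtilde C y Req a b)) ->
  (forall a b, (a.+1 < b <= T)%N ->
     (a < ch a b < b)%N /\
     (forall c, (a < c < b)%N ->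
        Num.min (Rtilde' C y a c) (Rtilde' C y c b) <=
        Num.min (Rtilde' C y a (ch a b)) (Rtilde' C y (ch a b) b))) ->
  forall a b, (a < b <= T)%N -> 0 < Rtilde C y Req a b ->
    exists a' b', inS T ch a' b' /\ (a <= a')%N /\ (b' <= b)%N /\
      Rtilde C y Req a b <= Rtilde' C y a' b'.
Proof.
move=> HC _ _ Hy Hmass Hch a b hab hR.
have hT : (0 < T)%N by lia.
have := @main_rec R T C y ch HC Hy Hch _ hR hT (T - 0) 0 T a b (leqnn _) (inS_root T ch).
move=> /(_ (leq0n a)); move: hab => /andP[h1 h2] /(_ h1 h2 (Hmass a b (ltac:(lia)) hR)).
by [].
Qed.
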